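(* (i) Let $\mathcal{C}$ be a category, $A,B$ objects of $\mathcal{C}$, and $L_1,L_2\subseteq\mathcal{C}(A,B)$ regular languages of arrows. Then $L_1\cap L_2$ is a regular language of arrows. (ii) Let $\mathcal{O}$ be an operad, $A$ a color of $\mathcal{O}$, and $L_1,L_2\subseteq\mathcal{O}(A)$ regular languages of constants. Then $L_1\cap L_2$ is a regular language of constants.
   Context: Composition in categories is written diagrammatically. Operads are colored, non-symmetric operads; $\mathcal{O}(A)$ is the set of constants (nullary operations) of color $A$. A functor of categories $p$ is ULF if for every arrow $\alpha$ and arrows $u,v$ with $p(\alpha)=uv$ there is a unique pair $\beta,\gamma$ with $\alpha=\beta\gamma$, $p(\beta)=u$, $p(\gamma)=v$; a functor of operads $p$ is ULF if for every operation $\alpha$ and operations $g,h$ and index $i$ with $p(\alpha)=g\circ_i h$ there is a unique pair $\beta,\gamma$ with $\alpha=\beta\circ_i\gamma$, $p(\beta)=g$, $p(\gamma)=h$. A functor is finitary if its fibers over every object/color and every arrow/operation are finite. A nondeterministic finite-state automaton over a category $\mathcal{C}$ is a tuple $(\mathcal{C},\mathcal{Q},p,q_0,q_f)$ with $p:\mathcal{Q}\to\mathcal{C}$ finitary ULF and $q_0,q_f$ objects of $\mathcal{Q}$, recognizing $\{p(\alpha)\mid\alpha:q_0\to q_f\}$; $L\subseteq\mathcal{C}(A,B)$ is a regular language of arrows if it is recognized by such an automaton with $p(q_0)=A$, $p(q_f)=B$. A nondeterministic finite-state automaton over an operad $\mathcal{O}$ is a tuple $(\mathcal{O},\mathcal{Q},p,q_r)$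 with $p:\mathcal{Q}\to\mathcal{O}$ a finitary ULF functor of operads and $q_r$ a color of $\mathcal{Q}$, recognizing $\{p(\alpha)\mid\alpha\in\mathcal{Q}(q_r)\}$; $L\subseteq\mathcal{O}(A)$ is a regular language of constants if it is recognized by such an automaton with $p(q_r)=A$. *)

(* Defs.v *)
(* Categories and coloured non-symmetric operads, presented
   with a type of objects/colours, a type of arrows/operations, source and
   target maps, and a total composition function that is only constrained
   on composable inputs. *)
From Stdlib Require Import List Arith.
Import ListNotations.

Set Implicit Arguments.
Unset Strict Implicit.

Definition finite_pred (X : Type) (P : X -> Prop) : Prop :=
  exists l : list X, forall x, P x -> In x l.

(** * Categories (composition written diagrammatically: comp f g = f;g) *)
Record Category := {
  Ob : Type;
  Ar : Type;
  dom : Ar -> Ob;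
  cod : Ar -> Ob;
  idA : Ob -> Ar;
  comp : Ar -> Ar -> Ar;
  dom_id : forall x, dom (idA x) = x;
  cod_id : forall x, cod (idA x) = x;
  dom_comp : forall f g, cod f = dom g -> dom (comp f g) = dom f;
  cod_comp : forall f g, cod f = dom g -> cod (comp f g) = cod g;
  comp_id_l : forall f, comp (idA (dom f)) f = f;
  comp_id_r : forall f, comp f (idA (cod f)) = f;
  comp_assoc : forall f g h, cod f = dom g -> cod g = dom h ->
      comp (comp f g) h = comp f (comp g h)
}.

Record Functor (C D : Category) := {
  fob : Ob C -> Ob D;
  far : Ar C -> Ar D;
  far_dom : forall f, dom (far f) = fob (dom f);
  far_cod : forall f, cod (far f) = fob (cod f);
  far_id : forall x, far (@idA C x) = @idA D (fob x);
  far_comp : forall f g, cod f = dom g -> far (comp f g) = comp (far f) (far g)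
}.

Definition ULF (C D : Category) (p : Functor C D) : Prop :=
  forall (a : Ar C) (u v : Ar D), cod u = dom v -> far p a = comp u v ->
    exists! bc : Ar C * Ar C,
      cod (fst bc) = dom (snd bc) /\ a = comp (fst bc) (snd bc) /\
      far p (fst bc) = u /\ far p (snd bc) = v.

Definition finitary (C D : Category) (p : Functor C D) : Prop :=
  (forall x : Ob D, finite_pred (fun q : Ob C => fob p q = x)) /\
  (forall f : Ar D, finite_pred (fun a : Ar C => far p a = f)).

Record cat_automaton (C : Category) := {
  aQ : Category;
  ap : Functor aQ C;
  ap_ulf : ULF ap;
  ap_fin : finitary ap;
  aq0 : Ob aQ;
  aqf : Ob aQ
}.

Definition cat_recognizes (C : Category) (M : cat_automaton C) (f : Ar C) : Prop :=
  exists a : Ar (aQ M), dom a = aq0 M /\ cod a = aqf M /\ far (ap M) a = f.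

Definition regular_arrows (C : Category) (A B : Ob C) (L : Ar C -> Prop) : Prop :=
  exists M : cat_automaton C,
    fob (ap M) (aq0 M) = A /\ fob (ap M) (aqf M) = B /\
    (forall f, L f <-> cat_recognizes M f).

(** * Coloured non-symmetric operads.
   An operation o has output colour [out o] and list of input colours [ins o];
   [ocomp g i h] is the partial composition g o_i h (inputs indexed from 0). *)
Definition ocomposable_gen (Col Op : Type) (out : Op -> Col) (ins : Op -> list Col)
  (g : Op) (i : nat) (h : Op) : Prop := nth_error (ins g) i = Some (out h).

Record Operad := {
  Col : Type;
  Op : Type;
  out : Op -> Col;
  ins : Op -> list Col;
  oid : Col -> Op;
  ocomp : Op -> nat -> Op -> Op;
  out_id : forall c, out (oid c) = c;
  ins_id : forall c, ins (oid c) = [c];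
  out_comp : forall g i h, ocomposable_gen out ins g i h ->
      out (ocomp g i h) = out g;
  ins_comp : forall g i h, ocomposable_gen out ins g i h ->
      ins (ocomp g i h) = firstn i (ins g) ++ ins h ++ skipn (S i) (ins g);
  ocomp_id_l : forall h, ocomp (oid (out h)) 0 h = h;
  ocomp_id_r : forall g i c, nth_error (ins g) i = Some c -> ocomp g i (oid c) = g;
  ocomp_assoc_seq : forall g i h j k,
      ocomposable_gen out ins g i h -> ocomposable_gen out ins h j k ->
      ocomp (ocomp g i h) (i + j) k = ocomp g i (ocomp h j k);
  ocomp_assoc_par : forall g i h j k, i < j ->
      ocomposable_gen out ins g i h -> ocomposable_gen out ins g j k ->
      ocomp (ocomp g j k) i h = ocomp (ocomp g i h) (j - 1 + length (ins h)) k
}.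

Definition ocomposable (O : Operad) (g : Op O) (i : nat) (h : Op O) : Prop :=
  ocomposable_gen (@out O) (@ins O) g i h.

Record OFunctor (O P : Operad) := {
  fcol : Col O -> Col P;
  fop : Op O -> Op P;
  fop_out : forall a, out (fop a) = fcol (out a);
  fop_ins : forall a, ins (fop a) = map fcol (ins a);
  fop_id : forall c, fop (@oid O c) = @oid P (fcol c);
  fop_comp : forall g i h, ocomposable g i h ->
      fop (ocomp g i h) = ocomp (fop g) i (fop h)
}.

Definition OULF (O P : Operad) (p : OFunctor O P) : Prop :=
  forall (a : Op O) (g h : Op P) (i : nat), ocomposable g i h ->
    fop p a = ocomp g i h ->
    exists! bc : Op O * Op O,
      ocomposable (fst bc) i (snd bc) /\ a = ocomp (fst bc) i (snd bc) /\
      fop p (fst bc) = g /\ fop p (snd bc) = h.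

Definition ofinitary (O P : Operad) (p : OFunctor O P) : Prop :=
  (forall c : Col P, finite_pred (fun q : Col O => fcol p q = c)) /\
  (forall f : Op P, finite_pred (fun a : Op O => fop p a = f)).

Record op_automaton (O : Operad) := {
  oQ : Operad;
  op : OFunctor oQ O;
  op_ulf : OULF op;
  op_fin : ofinitary op;
  oqr : Col oQ
}.

Definition is_constant (O : Operad) (c : Col O) (a : Op O) : Prop :=
  ins a = [] /\ out a = c.

Definition op_recognizes (O : Operad) (M : op_automaton O) (a : Op O) : Prop :=
  exists al : Op (oQ M), is_constant (oqr M) al /\ fop (op M) al = a.

Definition regular_constants (O : Operad) (A : Col O) (L : Op O -> Prop) : Prop :=
  exists M : op_automaton O,
    fcol (op M) (oqr M) = A /\ (forall a, L a <-> op_recognizes M a).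

(* Main.v *)
Require Import Defs.
From Stdlib Require Import List Arith Lia ClassicalEpsilon ProofIrrelevance.
Import ListNotations.

Lemma sig_eq {A} {P : A -> Prop} (x y : sig P) : proj1_sig x = proj1_sig y -> x = y.
Proof. destruct x, y; simpl; intros ->. f_equal; apply proof_irrelevance. Qed.

Lemma map_sig_inj {A} {P : A -> Prop} (l1 l2 : list (sig P)) :
  map (@proj1_sig _ _) l1 = map (@proj1_sig _ _) l2 -> l1 = l2.
Proof.
  revert l2; induction l1 as [|a l1 IH]; intros [|b l2]; simpl; try discriminate; auto.
  intros H; injection H; intros; f_equal; auto. apply sig_eq; auto.
Qed.

Lemma combine_skipn {A B} (l1 : list A) (l2 : list B) n :
  skipn n (combine l1 l2) = combine (skipn n l1) (skipn n l2).
Proof.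
  revert l1 l2; induction n; intros [|a l1] [|b l2]; simpl; auto.
  destruct (skipn n l1); auto.
Qed.

Lemma combine_app {A B} (a c : list A) (b d : list B) : length a = length b ->
  combine (a ++ c) (b ++ d) = combine a b ++ combine c d.
Proof.
  revert b; induction a; intros [|x b]; simpl; try discriminate; auto.
  intros H; f_equal; auto.
Qed.

Lemma nth_error_combine {A B} (l1 : list A) (l2 : list B) i x y :
  nth_error (combine l1 l2) i = Some (x, y) <-> nth_error l1 i = Some x /\ nth_error l2 i = Some y.
Proof.
  revert l1 l2 x y; induction i; intros [|a l1] [|b l2] x y; simpl.
  all: try (split; [discriminate | intros [H1 H2]; discriminate]).
  - split. intros H; injection H; intros; subst; auto.
    intros [H1 H2]; injection H1; injection H2; intros; subst; auto.
  - apply IHi.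
Qed.

Lemma map_fst_combine {A B} (l1 : list A) (l2 : list B) : length l1 = length l2 ->
  map fst (combine l1 l2) = l1.
Proof. revert l2; induction l1; intros [|b l2]; simpl; try discriminate; auto.
  intros H; f_equal; auto. Qed.

Lemma map_snd_combine {A B} (l1 : list A) (l2 : list B) : length l1 = length l2 ->
  map snd (combine l1 l2) = l2.
Proof. revert l2; induction l1; intros [|b l2]; simpl; try discriminate; auto.
  intros H; f_equal; auto. Qed.

Lemma map_length_eq {A B C} (f : A -> C) (g : B -> C) l1 l2 : map f l1 = map g l2 -> length l1 = length l2.
Proof. intros H; rewrite <- (length_map f), H, length_map; auto. Qed.

Definition PB {A B} (R : A -> B -> Prop) := {q : A * B | R (fst q) (snd q)}.

Definition mkPB {A B} (R : A -> B -> Prop) (q : A * B) : list (PB R) :=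
  match excluded_middle_informative (R (fst q) (snd q)) with
  | left h => [exist _ q h] | right _ => [] end.

Definition zipPB {A B} (R : A -> B -> Prop) l1 l2 : list (PB R) :=
  flat_map (mkPB R) (combine l1 l2).

Lemma zipPB_map {A B} (R : A -> B -> Prop) l1 l2 :
  (forall x, In x (combine l1 l2) -> R (fst x) (snd x)) ->
  map (@proj1_sig _ _) (zipPB R l1 l2) = combine l1 l2.
Proof.
  unfold zipPB. induction (combine l1 l2) as [|q l IH]; simpl; auto. intros H.
  unfold mkPB at 1. destruct excluded_middle_informative as [h|h].
  - simpl; f_equal; auto.
  - exfalso; apply h; auto.
Qed.

Lemma finite_PB {A B} (R : A -> B -> Prop) (l1 : list A) (l2 : list B) (x : PB R) :
  In (fst (proj1_sig x)) l1 -> In (snd (proj1_sig x)) l2 ->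
  In x (flat_map (mkPB R) (list_prod l1 l2)).
Proof.
  intros H1 H2. apply in_flat_map. exists (proj1_sig x). split.
  - destruct (proj1_sig x); apply in_prod; auto.
  - unfold mkPB. destruct excluded_middle_informative as [h|h].
    + left; apply sig_eq; reflexivity.
    + exfalso; apply h; exact (proj2_sig x).
Qed.

Section CatPB.
Context (C Q1 Q2 : Category) (p1 : Functor Q1 C) (p2 : Functor Q2 C).

Definition RO (q1 : Ob Q1) (q2 : Ob Q2) : Prop := fob p1 q1 = fob p2 q2.
Definition RA (a1 : Ar Q1) (a2 : Ar Q2) : Prop := far p1 a1 = far p2 a2.
Definition PO := PB RO.
Definition PA := PB RA.

Lemma RA_dom {a1 a2} : RA a1 a2 -> RO (dom a1) (dom a2).
Proof. unfold RA, RO; intros H; rewrite <- !far_dom, H; auto. Qed.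
Lemma RA_cod {a1 a2} : RA a1 a2 -> RO (cod a1) (cod a2).
Proof. unfold RA, RO; intros H; rewrite <- !far_cod, H; auto. Qed.
Lemma RO_id {q1 q2} : RO q1 q2 -> RA (idA q1) (idA q2).
Proof. unfold RA, RO; intros H; rewrite !far_id, H; auto. Qed.
Lemma RA_comp {a1 a2 b1 b2} : RA a1 a2 -> RA b1 b2 -> cod a1 = dom b1 -> cod a2 = dom b2 ->
  RA (comp a1 b1) (comp a2 b2).
Proof. unfold RA; intros H1 H2 E1 E2; rewrite !far_comp, H1, H2; auto. Qed.

Definition domP (a : PA) : PO :=
  exist _ (dom (fst (proj1_sig a)), dom (snd (proj1_sig a))) (RA_dom (proj2_sig a)).
Definition codP (a : PA) : PO :=
  exist _ (cod (fst (proj1_sig a)), cod (snd (proj1_sig a))) (RA_cod (proj2_sig a)).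
Definition idP (x : PO) : PA :=
  exist _ (idA (fst (proj1_sig x)), idA (snd (proj1_sig x))) (RO_id (proj2_sig x)).

Definition compP (a b : PA) : PA :=
  match excluded_middle_informative
    (cod (fst (proj1_sig a)) = dom (fst (proj1_sig b)) /\ cod (snd (proj1_sig a)) = dom (snd (proj1_sig b))) with
  | left h => exist _ (comp (fst (proj1_sig a)) (fst (proj1_sig b)), comp (snd (proj1_sig a)) (snd (proj1_sig b)))
                (RA_comp (proj2_sig a) (proj2_sig b) (proj1 h) (proj2 h))
  | right _ => a end.

Lemma codP_domP a b : codP a = domP b <->
  cod (fst (proj1_sig a)) = dom (fst (proj1_sig b)) /\ cod (snd (proj1_sig a)) = dom (snd (proj1_sig b)).
Proof.
  split.
  - intros H; apply (f_equal (@proj1_sig _ _)) in H; simpl in H; injection H; auto.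
  - intros [E1 E2]; apply sig_eq; simpl; rewrite E1, E2; auto.
Qed.

Lemma compP_eq a b (h : cod (fst (proj1_sig a)) = dom (fst (proj1_sig b)) /\ cod (snd (proj1_sig a)) = dom (snd (proj1_sig b))) :
  proj1_sig (compP a b) = (comp (fst (proj1_sig a)) (fst (proj1_sig b)), comp (snd (proj1_sig a)) (snd (proj1_sig b))).
Proof. unfold compP; destruct excluded_middle_informative; [reflexivity| contradiction]. Qed.

Definition PCat : Category.
Proof.
  refine (@Build_Category PO PA domP codP idP compP _ _ _ _ _ _ _).
  - intros [[x1 x2] h]; apply sig_eq; simpl; rewrite !dom_id; auto.
  - intros [[x1 x2] h]; apply sig_eq; simpl; rewrite !cod_id; auto.
  - intros f g H; apply codP_domP in H. apply sig_eq; unfold domP, codP; simpl. rewrite compP_eq by auto; simpl.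
    destruct H; rewrite !dom_comp; auto.
  - intros f g H; apply codP_domP in H. apply sig_eq; unfold domP, codP; simpl. rewrite compP_eq by auto; simpl.
    destruct H; rewrite !cod_comp; auto.
  - intros f; apply sig_eq; rewrite compP_eq; simpl; [|rewrite !cod_id; auto].
    rewrite !comp_id_l; destruct f as [[] ?]; auto.
  - intros f; apply sig_eq; rewrite compP_eq; simpl; [|rewrite !dom_id; auto].
    rewrite !comp_id_r; destruct f as [[] ?]; auto.
  - intros f g h H1 H2; apply codP_domP in H1; apply codP_domP in H2.
    destruct H1 as [E1 E2], H2 as [F1 F2].
    apply sig_eq.
    assert (Efg := compP_eq f g (conj E1 E2)).
    assert (Egh := compP_eq g h (conj F1 F2)).
    rewrite (compP_eq (compP f g) h); [| rewrite Efg; simpl; rewrite !cod_comp; auto].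
    rewrite (compP_eq f (compP g h)); [| rewrite Egh; simpl; rewrite !dom_comp; auto].
    rewrite Efg, Egh; simpl. rewrite !comp_assoc; auto.
Defined.

Definition PFun : Functor PCat C.
Proof.
  refine (@Build_Functor PCat C (fun x : PO => fob p1 (fst (proj1_sig x))) (fun a : PA => far p1 (fst (proj1_sig a))) _ _ _ _).
  - intros a; simpl; apply far_dom.
  - intros a; simpl; apply far_cod.
  - intros x; simpl; apply far_id.
  - intros f g H; simpl in *; apply codP_domP in H. rewrite compP_eq by auto; simpl. apply far_comp, H.
Defined.

Lemma PFun_ULF : ULF p1 -> ULF p2 -> ULF PFun.
Proof.
  intros U1 U2 a u v Euv Ea. simpl in Ea.
  destruct a as [[a1 a2] ha]. simpl in Ea. pose proof ha as ha'. unfold RA in ha'; simpl in ha'.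
  destruct (U1 a1 u v Euv Ea) as [[b1 c1] [[H1 [H2 [H3 H4]]] Hu1]].
  destruct (U2 a2 u v Euv ltac:(rewrite <- ha'; exact Ea)) as [[b2 c2] [[G1 [G2 [G3 G4]]] Hu2]].
  simpl in *.
  assert (hb : RA b1 b2) by (unfold RA; simpl; congruence).
  assert (hc : RA c1 c2) by (unfold RA; simpl; congruence).
  exists (exist _ (b1, b2) hb, exist _ (c1, c2) hc). simpl. split.
  - assert (Hc : cod b1 = dom c1 /\ cod b2 = dom c2) by auto.
    split; [apply codP_domP; auto|]. split; [|auto].
    apply sig_eq; rewrite compP_eq by auto; simpl; congruence.
  - intros [[[b1' b2'] hb'] [[c1' c2'] hc']]; simpl. intros [K1 [K2 [K3 K4]]].
    apply codP_domP in K1; simpl in K1. destruct K1 as [K1 K1'].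
    apply (f_equal (@proj1_sig _ _)) in K2. rewrite compP_eq in K2 by auto. simpl in K2.
    injection K2; intros K2b K2a.
    unfold RA in hb', hc'; simpl in *.
    assert (E1 : (b1, c1) = (b1', c1')) by (apply Hu1; simpl; auto).
    assert (E2 : (b2, c2) = (b2', c2')) by (apply Hu2; simpl; repeat split; congruence).
    injection E1; injection E2; intros; subst.
    f_equal; apply sig_eq; auto.
Qed.

Lemma PFun_fin : finitary p1 -> finitary p2 -> finitary PFun.
Proof.
  intros [O1 A1] [O2 A2]; split.
  - intros x. destruct (O1 x) as [l1 L1], (O2 x) as [l2 L2].
    exists (flat_map (mkPB RO) (list_prod l1 l2)). intros q Hq; simpl in Hq.
    apply finite_PB; [apply L1; auto| apply L2]. rewrite <- (proj2_sig q); auto.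
  - intros x. destruct (A1 x) as [l1 L1], (A2 x) as [l2 L2].
    exists (flat_map (mkPB RA) (list_prod l1 l2)). intros q Hq; simpl in Hq.
    apply finite_PB; [apply L1; auto| apply L2]. rewrite <- (proj2_sig q); auto.
Qed.
End CatPB.

Lemma cat_part : forall (C : Category) (A B : Ob C) (L1 L2 : Ar C -> Prop),
      regular_arrows A B L1 -> regular_arrows A B L2 ->
      regular_arrows A B (fun f => L1 f /\ L2 f).
Proof.
  intros C A B L1 L2 [M1 [HA1 [HB1 HL1]]] [M2 [HA2 [HB2 HL2]]].
  assert (h0 : @RO _ _ _ (ap M1) (ap M2) (aq0 M1) (aq0 M2)) by (unfold RO; congruence).
  assert (hf : @RO _ _ _ (ap M1) (ap M2) (aqf M1) (aqf M2)) by (unfold RO; congruence).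
  exists (@Build_cat_automaton C _ _ (@PFun_ULF _ _ _ _ _ (@ap_ulf _ M1) (@ap_ulf _ M2)) (@PFun_fin _ _ _ _ _ (@ap_fin _ M1) (@ap_fin _ M2))
           (exist _ (aq0 M1, aq0 M2) h0) (exist _ (aqf M1, aqf M2) hf)).
  simpl. split; [auto|]. split; [auto|].
  intros f. rewrite HL1, HL2. unfold cat_recognizes; simpl. split.
  - intros [[a1 [D1 [C1 F1]]] [a2 [D2 [C2 F2]]]].
    assert (ha : @RA _ _ _ (ap M1) (ap M2) a1 a2) by (unfold RA; congruence).
    exists (exist _ (a1, a2) ha). simpl. repeat split; auto; apply sig_eq; simpl; congruence.
  - intros [[[a1 a2] ha] [D [Cd F]]]. simpl in *.
    apply (f_equal (@proj1_sig _ _)) in D; apply (f_equal (@proj1_sig _ _)) in Cd. simpl in D, Cd.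
    injection D; injection Cd; intros. unfold RA in ha; simpl in ha.
    split; [exists a1 | exists a2]; repeat split; auto; congruence.
Qed.

Lemma comp_seq_comp (O : Operad) (g h k : Op O) i j :
  ocomposable g i h -> ocomposable h j k -> ocomposable (ocomp g i h) (i + j) k.
Proof.
  unfold ocomposable, ocomposable_gen; intros H1 H2. rewrite ins_comp by exact H1.
  assert (Li : i < length (ins g)) by (apply nth_error_Some; rewrite H1; discriminate).
  assert (Lj : j < length (ins h)) by (apply nth_error_Some; rewrite H2; discriminate).
  rewrite nth_error_app2 by (rewrite firstn_length_le; lia).
  rewrite firstn_length_le by lia. replace (i + j - i) with j by lia.
  rewrite nth_error_app1 by lia. exact H2.
Qed.

Lemma comp_seq2 (O : Operad) (g h k : Op O) i j :
  ocomposable g i h -> ocomposable h j k -> ocomposable g i (ocomp h j k).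
Proof.
  unfold ocomposable, ocomposable_gen; intros H1 H2. rewrite out_comp by exact H2. exact H1.
Qed.

Lemma comp_par1 (O : Operad) (g h k : Op O) i j : i < j ->
  ocomposable g i h -> ocomposable g j k -> ocomposable (ocomp g j k) i h.
Proof.
  unfold ocomposable, ocomposable_gen; intros Hij H1 H2. rewrite ins_comp by exact H2.
  assert (Lj : j < length (ins g)) by (apply nth_error_Some; rewrite H2; discriminate).
  rewrite nth_error_app1 by (rewrite firstn_length_le; lia).
  rewrite nth_error_firstn. destruct (Nat.ltb_spec i j); [exact H1| lia].
Qed.

Lemma comp_par2 (O : Operad) (g h k : Op O) i j : i < j ->
  ocomposable g i h -> ocomposable g j k -> ocomposable (ocomp g i h) (j - 1 + length (ins h)) k.
Proof.
  unfold ocomposable, ocomposable_gen; intros Hij H1 H2. rewrite ins_comp by exact H1.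
  assert (Lj : j < length (ins g)) by (apply nth_error_Some; rewrite H2; discriminate).
  rewrite nth_error_app2 by (rewrite firstn_length_le; lia).
  rewrite firstn_length_le by lia.
  rewrite nth_error_app2 by lia.
  rewrite nth_error_skipn. replace (S i + (j - 1 + length (ins h) - i - length (ins h))) with j by lia.
  exact H2.
Qed.

Section OpPB.
Context (O Q1 Q2 : Operad) (p1 : OFunctor Q1 O) (p2 : OFunctor Q2 O).

Definition RC (q1 : Col Q1) (q2 : Col Q2) : Prop := fcol p1 q1 = fcol p2 q2.
Definition RP (a1 : Op Q1) (a2 : Op Q2) : Prop := fop p1 a1 = fop p2 a2.
Definition PC := PB RC.
Definition PP := PB RP.

Lemma RP_out {a1 a2} : RP a1 a2 -> RC (out a1) (out a2).
Proof. unfold RP, RC; intros H; rewrite <- !fop_out, H; auto. Qed.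
Lemma RP_ins {a1 a2} : RP a1 a2 -> map (fcol p1) (ins a1) = map (fcol p2) (ins a2).
Proof. unfold RP; intros H; rewrite <- !fop_ins, H; auto. Qed.
Lemma RP_len {a1 a2} : RP a1 a2 -> length (ins a1) = length (ins a2).
Proof. intros H; exact (map_length_eq _ _ _ _ (RP_ins H)). Qed.
Lemma RP_comb {a1 a2} : RP a1 a2 -> forall x, In x (combine (ins a1) (ins a2)) -> RC (fst x) (snd x).
Proof.
  intros H [x y] Hx. apply In_nth_error in Hx. destruct Hx as [n Hn].
  apply nth_error_combine in Hn. destruct Hn as [N1 N2].
  apply (map_nth_error (fcol p1)) in N1. apply (map_nth_error (fcol p2)) in N2.
  rewrite (RP_ins H) in N1. rewrite N1 in N2. injection N2; auto.
Qed.
Lemma RC_id {q1 q2} : RC q1 q2 -> RP (oid q1) (oid q2).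
Proof. unfold RP, RC; intros H; rewrite !fop_id, H; auto. Qed.
Lemma RP_comp {g1 g2 h1 h2} i : RP g1 g2 -> RP h1 h2 -> ocomposable g1 i h1 -> ocomposable g2 i h2 ->
  RP (ocomp g1 i h1) (ocomp g2 i h2).
Proof. unfold RP; intros H1 H2 E1 E2; rewrite !fop_comp, H1, H2; auto. Qed.

Definition outP (a : PP) : PC := exist _ (out (fst (proj1_sig a)), out (snd (proj1_sig a))) (RP_out (proj2_sig a)).
Definition insP (a : PP) : list PC := zipPB RC (ins (fst (proj1_sig a))) (ins (snd (proj1_sig a))).
Definition oidP (c : PC) : PP := exist _ (oid (fst (proj1_sig c)), oid (snd (proj1_sig c))) (RC_id (proj2_sig c)).
Definition ocompP (g : PP) (i : nat) (h : PP) : PP :=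
  match excluded_middle_informative
    (ocomposable (fst (proj1_sig g)) i (fst (proj1_sig h)) /\ ocomposable (snd (proj1_sig g)) i (snd (proj1_sig h))) with
  | left e => exist _ (ocomp (fst (proj1_sig g)) i (fst (proj1_sig h)), ocomp (snd (proj1_sig g)) i (snd (proj1_sig h)))
       (RP_comp i (proj2_sig g) (proj2_sig h) (proj1 e) (proj2 e))
  | right _ => g end.

Lemma insP_map a : map (@proj1_sig _ _) (insP a) = combine (ins (fst (proj1_sig a))) (ins (snd (proj1_sig a))).
Proof. apply zipPB_map, RP_comb, (proj2_sig a). Qed.

Lemma len_insP a : length (insP a) = length (ins (fst (proj1_sig a))).
Proof.
  transitivity (length (map (@proj1_sig _ _) (insP a))); [symmetry; apply length_map|]. rewrite insP_map, length_combine, (RP_len (proj2_sig a)). lia.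
Qed.

Lemma ocompP_eq g i h (e : ocomposable (fst (proj1_sig g)) i (fst (proj1_sig h)) /\ ocomposable (snd (proj1_sig g)) i (snd (proj1_sig h))) :
  proj1_sig (ocompP g i h) = (ocomp (fst (proj1_sig g)) i (fst (proj1_sig h)), ocomp (snd (proj1_sig g)) i (snd (proj1_sig h))).
Proof. unfold ocompP; destruct excluded_middle_informative; [reflexivity| contradiction]. Qed.

Lemma nth_insP a i c : nth_error (insP a) i = Some c ->
  nth_error (ins (fst (proj1_sig a))) i = Some (fst (proj1_sig c)) /\ nth_error (ins (snd (proj1_sig a))) i = Some (snd (proj1_sig c)).
Proof.
  intros H. apply (map_nth_error (@proj1_sig _ _)) in H. rewrite insP_map in H.
  apply nth_error_combine. destruct (proj1_sig c); auto.
Qed.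

Lemma nth_sig {A} {P : A -> Prop} (L : list (sig P)) i (y : sig P) :
  nth_error (map (@proj1_sig _ _) L) i = Some (proj1_sig y) -> nth_error L i = Some y.
Proof.
  rewrite nth_error_map. destruct (nth_error L i); simpl; [|discriminate].
  intros H; injection H; intros E; f_equal; apply sig_eq; exact E.
Qed.

Lemma ocompP_iff g i h : ocomposable_gen outP insP g i h <->
  (ocomposable (fst (proj1_sig g)) i (fst (proj1_sig h)) /\ ocomposable (snd (proj1_sig g)) i (snd (proj1_sig h))).
Proof.
  unfold ocomposable, ocomposable_gen. split.
  - intros H. apply nth_insP in H. exact H.
  - intros H. apply nth_error_combine in H. rewrite <- insP_map in H.
    apply nth_sig. exact H.
Qed.

Definition POp : Operad.
Proof.
  refine (@Build_Operad PC PP outP insP oidP ocompP _ _ _ _ _ _ _ _).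
  - intros [[c1 c2] hc]; apply sig_eq; simpl; rewrite !out_id; auto.
  - intros [[c1 c2] hc]; apply map_sig_inj; rewrite insP_map; simpl; rewrite !ins_id; reflexivity.
  - intros g i h H; apply ocompP_iff in H; apply sig_eq; unfold outP. simpl proj1_sig at 1.
    rewrite ocompP_eq by exact H; simpl; rewrite !out_comp by apply H; reflexivity.
  - intros g i h H; apply ocompP_iff in H. apply map_sig_inj.
    rewrite insP_map, ocompP_eq by exact H; cbn [fst snd].
    rewrite !map_app, insP_map, <- firstn_map, <- skipn_map, insP_map.
    rewrite combine_firstn, combine_skipn, !ins_comp by apply H.
    pose proof (RP_len (proj2_sig g)) as Lg. pose proof (RP_len (proj2_sig h)) as Lh.
    rewrite combine_app by (rewrite !length_firstn, Lg; reflexivity).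
    rewrite combine_app by exact Lh. reflexivity.
  - intros h; apply sig_eq. rewrite ocompP_eq.
    + simpl. rewrite !ocomp_id_l. destruct h as [[] ?]; reflexivity.
    + simpl; unfold ocomposable, ocomposable_gen; rewrite !ins_id; split; reflexivity.
  - intros g i c H. apply nth_insP in H. apply sig_eq. rewrite ocompP_eq.
    + simpl. rewrite !ocomp_id_r by apply H. destruct g as [[] ?]; reflexivity.
    + simpl; unfold ocomposable, ocomposable_gen; rewrite !out_id; exact H.
  - intros g i h j k H1 H2. apply ocompP_iff in H1. apply ocompP_iff in H2.
    assert (Egh := ocompP_eq g i h H1). assert (Ehk := ocompP_eq h j k H2).
    apply sig_eq.
    rewrite (ocompP_eq (ocompP g i h) (i + j) k); [| rewrite Egh; simpl; split; apply comp_seq_comp; tauto].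
    rewrite (ocompP_eq g i (ocompP h j k)); [| rewrite Ehk; simpl; split; apply comp_seq2; tauto].
    rewrite Egh, Ehk; simpl. rewrite !ocomp_assoc_seq by tauto. reflexivity.
  - intros g i h j k Hij H1 H2. apply ocompP_iff in H1. apply ocompP_iff in H2.
    assert (Egh := ocompP_eq g i h H1). assert (Egk := ocompP_eq g j k H2).
    pose proof (RP_len (proj2_sig h)) as Lh.
    apply sig_eq. rewrite len_insP.
    rewrite (ocompP_eq (ocompP g j k) i h); [| rewrite Egk; simpl; split; apply comp_par1; tauto].
    rewrite (ocompP_eq (ocompP g i h) _ k); [| rewrite Egh; simpl; split; [|rewrite Lh]; apply comp_par2; tauto].
    rewrite Egh, Egk; simpl. f_equal; [|rewrite Lh]; apply ocomp_assoc_par; tauto.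
Defined.

Definition PoFun : OFunctor POp O.
Proof.
  refine (@Build_OFunctor POp O (fun x : PC => fcol p1 (fst (proj1_sig x))) (fun a : PP => fop p1 (fst (proj1_sig a))) _ _ _ _).
  - intros a; simpl; apply fop_out.
  - intros a; simpl.
    assert (E : forall L : list PC, map (fun x : PC => fcol p1 (fst (proj1_sig x))) L = map (fcol p1) (map fst (map (@proj1_sig _ _) L)))
      by (intros L; rewrite !map_map; reflexivity).
    rewrite E, insP_map, map_fst_combine by apply (RP_len (proj2_sig a)). apply fop_ins.
  - intros c; simpl; apply fop_id.
  - intros g i h H; simpl in *; apply ocompP_iff in H. rewrite ocompP_eq by exact H; simpl. apply fop_comp, H.
Defined.

Lemma PoFun_ULF : OULF p1 -> OULF p2 -> OULF PoFun.
Proof.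
  intros U1 U2 a g h i Hc Ea. simpl in Ea.
  destruct a as [[a1 a2] ha]. simpl in Ea. pose proof ha as ha'. unfold RP in ha'; simpl in ha'.
  destruct (U1 a1 g h i Hc Ea) as [[b1 c1] [[H1 [H2 [H3 H4]]] Hu1]].
  destruct (U2 a2 g h i Hc ltac:(rewrite <- ha'; exact Ea)) as [[b2 c2] [[G1 [G2 [G3 G4]]] Hu2]].
  simpl in *.
  assert (hb : RP b1 b2) by (unfold RP; simpl; congruence).
  assert (hc : RP c1 c2) by (unfold RP; simpl; congruence).
  exists (exist _ (b1, b2) hb, exist _ (c1, c2) hc). simpl. split.
  - assert (Hcc : ocomposable b1 i c1 /\ ocomposable b2 i c2) by auto.
    split; [apply ocompP_iff; auto|]. split; [|auto].
    apply sig_eq; rewrite ocompP_eq by auto; simpl; congruence.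
  - intros [[[b1' b2'] hb'] [[c1' c2'] hc']]; simpl. intros [K1 [K2 [K3 K4]]].
    apply ocompP_iff in K1; simpl in K1. destruct K1 as [K1 K1'].
    apply (f_equal (@proj1_sig _ _)) in K2. rewrite ocompP_eq in K2 by auto. simpl in K2.
    injection K2; intros K2b K2a.
    unfold RP in hb', hc'; simpl in *.
    assert (E1 : (b1, c1) = (b1', c1')) by (apply Hu1; simpl; auto).
    assert (E2 : (b2, c2) = (b2', c2')) by (apply Hu2; simpl; repeat split; congruence).
    injection E1; injection E2; intros; subst.
    f_equal; apply sig_eq; auto.
Qed.

Lemma PoFun_fin : ofinitary p1 -> ofinitary p2 -> ofinitary PoFun.
Proof.
  intros [O1 A1] [O2 A2]; split.
  - intros x. destruct (O1 x) as [l1 L1], (O2 x) as [l2 L2].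
    exists (flat_map (mkPB RC) (list_prod l1 l2)). intros q Hq; simpl in Hq.
    apply finite_PB; [apply L1; auto| apply L2]. rewrite <- (proj2_sig q); auto.
  - intros x. destruct (A1 x) as [l1 L1], (A2 x) as [l2 L2].
    exists (flat_map (mkPB RP) (list_prod l1 l2)). intros q Hq; simpl in Hq.
    apply finite_PB; [apply L1; auto| apply L2]. rewrite <- (proj2_sig q); auto.
Qed.

Lemma insP_nil a : insP a = [] <-> ins (fst (proj1_sig a)) = [] /\ ins (snd (proj1_sig a)) = [].
Proof.
  split.
  - intros H. pose proof (len_insP a) as L. pose proof (RP_len (proj2_sig a)) as L2.
    rewrite H in L. simpl in L.
    destruct (ins (fst (proj1_sig a))); [|discriminate]. simpl in L2.
    destruct (ins (snd (proj1_sig a))); [|discriminate]. auto.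
  - intros [E1 E2]. apply map_sig_inj. rewrite insP_map, E1, E2. reflexivity.
Qed.
End OpPB.

Lemma op_part : forall (O : Operad) (A : Col O) (L1 L2 : Op O -> Prop),
      regular_constants A L1 -> regular_constants A L2 ->
      regular_constants A (fun a => L1 a /\ L2 a).
Proof.
  intros O A L1 L2 [M1 [HA1 HL1]] [M2 [HA2 HL2]].
  assert (h0 : @RC _ _ _ (op M1) (op M2) (oqr M1) (oqr M2)) by (unfold RC; congruence).
  exists (@Build_op_automaton O _ _ (@PoFun_ULF _ _ _ _ _ (@op_ulf _ M1) (@op_ulf _ M2))
            (@PoFun_fin _ _ _ _ _ (@op_fin _ M1) (@op_fin _ M2)) (exist _ (oqr M1, oqr M2) h0)).
  simpl. split; [auto|].
  intros a. rewrite HL1, HL2. unfold op_recognizes, is_constant; simpl. split.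
  - intros [[a1 [[I1 O1] F1]] [a2 [[I2 O2] F2]]].
    assert (ha : @RP _ _ _ (op M1) (op M2) a1 a2) by (unfold RP; congruence).
    exists (exist _ (a1, a2) ha). simpl. split; [split|auto].
    + apply insP_nil; simpl; auto.
    + apply sig_eq; simpl; congruence.
  - intros [[[a1 a2] ha] [[I Ou] F]]. simpl in *.
    apply insP_nil in I; simpl in I.
    apply (f_equal (@proj1_sig _ _)) in Ou. simpl in Ou.
    injection Ou; intros. unfold RP in ha; simpl in ha.
    split; [exists a1 | exists a2]; repeat split; try tauto; congruence.
Qed.

Theorem mainTheorem12 :
  (forall (C : Category) (A B : Ob C) (L1 L2 : Ar C -> Prop),
      regular_arrows A B L1 -> regular_arrows A B L2 ->
      regular_arrows A B (fun f => L1 f /\ L2 f)) /\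
  (forall (O : Operad) (A : Col O) (L1 L2 : Op O -> Prop),
      regular_constants A L1 -> regular_constants A L2 ->
      regular_constants A (fun a => L1 a /\ L2 a)).
Proof. split; [exact cat_part | exact op_part]. Qed.
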